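(* Let $\mathcal{C}=\langle C_\delta:\delta\in\mathrm{Lim}\rangle$ be a $\clubsuit$-sequence, let $n\geq1$, and let $\mathcal{F}$ be a construction scheme over $\omega_1$ of a good type which satisfies $IH_\rho(\mathcal{C},n)$. Then $\mathcal{F}$ is $(n+1)$-$\rho$-capturing.
   Context: $\mathrm{Lim}$ is the set of nonzero countable limit ordinals. A $\clubsuit$-sequence is $\langle C_\delta:\delta\in\mathrm{Lim}\rangle$ with $C_\delta\subseteq\delta$ of order type $\omega$, $\sup C_\delta=\delta$, and $\{\delta:C_\delta\subseteq S\}$ stationary for every uncountable $S\subseteq\omega_1$. $\mathrm{Lim}_0=\mathrm{Lim}$, $\mathrm{Lim}_{n+1}=\{\delta\in\mathrm{Lim}:C_\delta\subseteq\mathrm{Lim}_n\}$; $C^0_\delta=C_\delta$, $C^{n+1}_\delta=\bigcup_{\xi\in C_\delta}C^n_\xi$ for $\delta\in\mathrm{Lim}_{n+1}$. A type is a sequence $\langle m_k,n_{k+1},r_{k+1}\rangle_{k\in\omega}$ of natural numbers with $m_0=1$ and, for all $k$, $n_{k+1}\geq2$, $m_k>r_{k+1}$, $m_{k+1}=r_{k+1}+(m_k-r_{k+1})n_{k+1}$; good if every $r$ equals $r_k$ for infinitely many $k\geq1$. $A<B$ means every element of $A$ is below every element of $B$; $D(a)$ is the $a$-th element of a finite set of ordinals $D$. A construction scheme of type $\tau$ over a set of ordinals $Y$ is a family $\mathcal{F}$ of nonempty finite subsets of $Y$, cofinal among finite subsets of $Y$ under $\subseteq$, each of size $m_k$ for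 some $k$, with $\mathcal{F}_k=\{F\in\mathcal{F}:|F|=m_k\}$ satisfying: (i) for $E,F\in\mathcal{F}_k$, $E\cap F$ is an initial segment of both; (ii) every $F\in\mathcal{F}_{k+1}$ equals $F_0\cup\dots\cup F_{n_{k+1}-1}$ with $F_i\in\mathcal{F}_k$ a $\Delta$-system with root $R(F)$, $|R(F)|=r_{k+1}$, $R(F)<F_0\setminus R(F)<\dots<F_{n_{k+1}-1}\setminus R(F)$ (the canonical pieces). $\rho(\alpha,\beta)=\min\{k:\exists F\in\mathcal{F}_k\ \{\alpha,\beta\}\subseteq F\}$; $(\alpha)_k=\{\xi\leq\alpha:\rho(\xi,\alpha)\leq k\}$; for $k\geq1$, $\Xi_\alpha(k)=-1$ if $\alpha\in R(F)$ and $=i$ if $\alpha\in F_i\setminus R(F)$, for any $F\in\mathcal{F}_k$ containing $\alpha$. A root-tail-tail $\Delta$-system is a family (or sequence $\langle D_i\rangle_{i<n}$), $n\geq2$, of finite sets of ordinals of common size $m$ with pairwise intersections equal to a root $R$, $R<D_i\setminus R$, and $D_0\setminus R<\dots<D_{n-1}\setminus R$; $r=|R|$. It is $\rho$-captured at level $l\geq1$ if $n\leq n_l$, (I) $\Xi_{D_i(a)}(l)=-1$ for $a<r$ and $=i$ for $a\geq r$ ($i<n$, $a<m$), and (II) $\rho(D_i(a),D_j(a))=l$ for $i<j<n$, $r\leq a<m$. A scheme over $\omega_1$ is $n$-$\rho$-capturing if for every uncountable family $\mathcal{S}$ of nonempty finite subsets of $\omega_1$ there are infinitely many $l$ for which some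 $n$ distinct members of $\mathcal{S}$, suitably enumerated, form a root-tail-tail $\Delta$-system $\rho$-captured at level $l$. A tuple $(n,\delta,k,A)$ is $\mathcal{F}$-good if $n,k\in\omega$, $\delta\in\mathrm{Lim}_n$, the family $\{(\xi)_k:\xi\in C^n_\delta\}$ is a root-tail-tail $\Delta$-system with some root $R^n_k(\delta)$, and $A$ is a nonempty finite subset of $[\delta,\omega_1)$. $\mathcal{F}$ satisfies $IH_\rho(\mathcal{C},n)$ if for every $\mathcal{F}$-good tuple $(n,\delta,k,A)$ there are infinitely many $l\geq k$ with $n_l>n$ for which there exist $F\in\mathcal{F}_l$ (with canonical pieces $F_0,\dots,F_{n_l-1}$ and root $R(F)$) and an $n$-element set $D\subseteq C^n_\delta$ (with $D(i)$ its $i$-th element) such that $A\subseteq F_n\setminus R(F)$ and, for each $i<n$, $(D(i))_k\subseteq F_i$ and $(D(i))_k\cap R(F)=R^n_k(\delta)$. *)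

(* Defs.v *)
(* omega_1 is represented abstractly as a type T with a strict
   order lt which is a well-order, uncountable, with all proper initial
   segments countable (this characterizes omega_1 up to isomorphism).
   Finite sets of ordinals are represented by strictly increasing lists
   (the canonical increasing enumeration), so D(a) = nth a D. *)
From Stdlib Require Import List Sorting.Sorted ZArith Arith.
Import ListNotations.

Section Omega1.
Variable T : Type.
Variable lt : T -> T -> Prop.

Definition le (x y : T) : Prop := lt x y \/ x = y.

Definition is_omega1 : Prop :=
  (forall x, ~ lt x x) /\
  (forall x y z, lt x y -> lt y z -> lt x z) /\
  (forall x y, lt x y \/ x = y \/ lt y x) /\
  well_founded lt /\
  (~ exists f : T -> nat, forall x y, f x = f y -> x = y) /\
  (forall a, exists f : T -> nat, forall x y, lt x a -> lt y a -> f x = f y -> x = y).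

Definition countable_set (P : T -> Prop) : Prop :=
  exists f : T -> nat, forall x y, P x -> P y -> f x = f y -> x = y.

Definition countable_fam (S : list T -> Prop) : Prop :=
  exists f : list T -> nat, forall L L', S L -> S L' -> f L = f L' -> L = L'.

Definition finite_set (P : T -> Prop) : Prop :=
  exists L : list T, forall x, P x -> In x L.

Definition is_lim (d : T) : Prop :=
  (exists b, lt b d) /\ (forall b, lt b d -> exists g, lt b g /\ lt g d).

Definition ordtype_omega (P : T -> Prop) : Prop :=
  ~ finite_set P /\ forall y, P y -> finite_set (fun x => P x /\ lt x y).

Definition club (Cl : T -> Prop) : Prop :=
  (forall a, exists b, Cl b /\ le a b) /\
  (forall d, is_lim d -> (forall b, lt b d -> exists g, Cl g /\ lt b g /\ lt g d) -> Cl d).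

Definition stationary (S : T -> Prop) : Prop :=
  forall Cl, club Cl -> exists d, Cl d /\ S d.

(* C : a sequence indexed by ordinals; only its values at limits matter *)
Definition clubsuit (C : T -> T -> Prop) : Prop :=
  (forall d, is_lim d ->
     (forall x, C d x -> lt x d) /\ ordtype_omega (C d) /\
     (forall b, lt b d -> exists g, C d g /\ lt b g)) /\
  (forall S : T -> Prop, ~ countable_set S ->
     stationary (fun d => is_lim d /\ forall x, C d x -> S x)).

Fixpoint LimN (C : T -> T -> Prop) (k : nat) (d : T) : Prop :=
  match k with
  | 0 => is_lim d
  | S k' => is_lim d /\ forall x, C d x -> LimN C k' x
  end.

Fixpoint Cn (C : T -> T -> Prop) (k : nat) (d : T) (x : T) : Prop :=
  match k with
  | 0 => C d x
  | S k' => exists xi, C d xi /\ Cn C k' xi x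
  end.

(* m k = m_k ; ns k = n_k and rs k = r_k (only meaningful for k >= 1) *)
Definition is_type (m ns rs : nat -> nat) : Prop :=
  m 0 = 1 /\
  forall k, 2 <= ns (S k) /\ rs (S k) < m k /\
            m (S k) = rs (S k) + (m k - rs (S k)) * ns (S k).

Definition good_type (m ns rs : nat -> nat) : Prop :=
  is_type m ns rs /\
  forall r N, exists k, N <= k /\ 1 <= k /\ rs k = r.

Definition tail_lt (L L' R : list T) : Prop :=
  forall x y, In x L -> ~ In x R -> In y L' -> ~ In y R -> lt x y.

Definition rtt_seq (n : nat) (D : nat -> list T) (R : list T) : Prop :=
  2 <= n /\ StronglySorted lt R /\
  (forall i, i < n -> StronglySorted lt (D i) /\ length (D i) = length (D 0)) /\
  (forall i j, i < n -> j < n -> i <> j ->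
     forall x, (In x (D i) /\ In x (D j)) <-> In x R) /\
  (forall i, i < n -> forall x y, In x R -> In y (D i) -> ~ In y R -> lt x y) /\
  (forall i j, i < j -> j < n -> tail_lt (D i) (D j) R).

Definition rtt_fam (Fam : list T -> Prop) (R : list T) : Prop :=
  (exists L1 L2, Fam L1 /\ Fam L2 /\ L1 <> L2) /\ StronglySorted lt R /\
  (forall L, Fam L -> StronglySorted lt L) /\
  (forall L L', Fam L -> Fam L' -> length L = length L') /\
  (forall L L', Fam L -> Fam L' -> L <> L' ->
     forall x, (In x L /\ In x L') <-> In x R) /\
  (forall L, Fam L -> forall x y, In x R -> In y L -> ~ In y R -> lt x y) /\
  (forall L L', Fam L -> Fam L' -> L <> L' -> tail_lt L L' R \/ tail_lt L' L R).

Definition rep (L : list T) (P : T -> Prop) : Prop :=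
  StronglySorted lt L /\ forall x, In x L <-> P x.

Variables (m ns rs : nat -> nat) (F : list T -> Prop).

Definition Fk (k : nat) (L : list T) : Prop := F L /\ length L = m k.

Definition inter_init (E G : list T) : Prop :=
  forall x y, In x E -> In y E -> In y G -> lt x y -> In x G.

Definition canon (l : nat) (G R : list T) (P : nat -> list T) : Prop :=
  1 <= l /\ length R = rs l /\
  (forall i, i < ns l -> Fk (l - 1) (P i)) /\
  (forall x, In x G <-> exists i, i < ns l /\ In x (P i)) /\
  rtt_seq (ns l) P R.

Definition scheme : Prop :=
  (forall L, F L -> StronglySorted lt L /\ L <> [] /\ exists k, length L = m k) /\
  (forall A : list T, exists L, F L /\ forall x, In x A -> In x L) /\
  (forall k E G, Fk k E -> Fk k G -> inter_init E G /\ inter_init G E) /\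
  (forall k G, Fk (S k) G -> exists R P, canon (S k) G R P).

Definition rho_eq (a b : T) (k : nat) : Prop :=
  (exists G, Fk k G /\ In a G /\ In b G) /\
  forall j, j < k -> ~ exists G, Fk j G /\ In a G /\ In b G.

Definition clos (a : T) (k : nat) (x : T) : Prop :=
  le x a /\ exists j, j <= k /\ exists G, Fk j G /\ In x G /\ In a G.

Definition Xi_eq (a : T) (l : nat) (v : Z) : Prop :=
  (exists G, Fk l G /\ In a G) /\
  forall G R P, Fk l G -> In a G -> canon l G R P ->
    (In a R /\ v = (-1)%Z) \/
    (exists i, i < ns l /\ In a (P i) /\ ~ In a R /\ v = Z.of_nat i).

Definition captured (n : nat) (D : nat -> list T) (R : list T) (l : nat) : Prop :=
  1 <= l /\ n <= ns l /\
  (forall i a x, i < n -> nth_error (D i) a = Some x ->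
     Xi_eq x l (if Nat.ltb a (length R) then (-1)%Z else Z.of_nat i)) /\
  (forall i j a x y, i < j -> j < n -> length R <= a ->
     nth_error (D i) a = Some x -> nth_error (D j) a = Some y -> rho_eq x y l).

Definition rho_capturing (n : nat) : Prop :=
  forall S : list T -> Prop,
    (forall L, S L -> StronglySorted lt L /\ L <> []) ->
    ~ countable_fam S ->
    forall N, exists l, N <= l /\
      exists (D : nat -> list T) (R : list T),
        (forall i, i < n -> S (D i)) /\
        (forall i j, i < n -> j < n -> i <> j -> D i <> D j) /\
        rtt_seq n D R /\ captured n D R l.

Definition IH_rho (C : T -> T -> Prop) (n : nat) : Prop :=
  forall d k (A R : list T),
    (* (n, d, k, A) is F-good, with root R = R^n_k(d) *)
    LimN C n d ->
    (forall xi, Cn C n d xi -> exists L, rep L (clos xi k)) ->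
    rtt_fam (fun L => exists xi, Cn C n d xi /\ rep L (clos xi k)) R ->
    StronglySorted lt A -> A <> [] -> (forall x, In x A -> ~ lt x d) ->
    forall N, exists l, N <= l /\ k <= l /\ n < ns l /\
      exists G RF (P : nat -> list T) (D : list T),
        Fk l G /\ canon l G RF P /\
        StronglySorted lt D /\ length D = n /\ (forall xi, In xi D -> Cn C n d xi) /\
        (forall x, In x A -> In x (P n) /\ ~ In x RF) /\
        (forall i xi, i < n -> nth_error D i = Some xi ->
           (forall x, clos xi k x -> In x (P i)) /\
           (forall x, (clos xi k x /\ In x RF) <-> In x R)).

End Omega1.

(* Main.v *)
Require Import Defs.
From Stdlib Require Import List Sorting.Sorted ZArith Arith Lia Permutation.
From Stdlib Require Import Classical ClassicalEpsilon FunctionalExtensionality.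
From Stdlib Require Cantor.
Import ListNotations.

Definition cntb {X : Type} (P : X -> Prop) : Prop :=
  exists f : X -> nat, forall x y, P x -> P y -> f x = f y -> x = y.

Lemma cnt_sub {X} (P Q : X -> Prop) : (forall x, Q x -> P x) -> cntb P -> cntb Q.
Proof. intros H [f Hf]. exists f. intros x y Hx Hy. apply Hf; auto. Qed.

Lemma unc_nonempty {X} (P : X -> Prop) : ~ cntb P -> exists x, P x.
Proof.
  intros H. apply NNPP. intros Hn. apply H. exists (fun _ => 0).
  intros x y Hx. exfalso. apply Hn. eauto.
Qed.

Lemma cnt_single {X} (a : X) (P : X -> Prop) : (forall x, P x -> x = a) -> cntb P.
Proof. intros H. exists (fun _ => 0). intros x y Hx Hy _. rewrite (H x Hx), (H y Hy). auto. Qed.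

Lemma to_nat_inj a b c d : Cantor.to_nat (a, b) = Cantor.to_nat (c, d) -> a = c /\ b = d.
Proof.
  intros H. assert (E : Cantor.of_nat (Cantor.to_nat (a, b)) = Cantor.of_nat (Cantor.to_nat (c, d))) by (rewrite H; auto).
  rewrite !Cantor.cancel_of_to in E. inversion E. auto.
Qed.

Lemma pigeon {X} (P : X -> Prop) (g : X -> nat) :
  ~ cntb P -> exists c, ~ cntb (fun x => P x /\ g x = c).
Proof.
  intros H. apply NNPP. intros Hn.
  assert (Hc : forall c, cntb (fun x => P x /\ g x = c)).
  { intros c. apply NNPP. intros Hc. apply Hn. eauto. }
  apply H.
  set (f := fun c => proj1_sig (constructive_indefinite_description _ (Hc c))).
  assert (Hf : forall c x y, (P x /\ g x = c) -> (P y /\ g y = c) -> f c x = f c y -> x = y).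
  { intros c. unfold f. destruct (constructive_indefinite_description _ (Hc c)) as [h Hh]. simpl. auto. }
  exists (fun x => Cantor.to_nat (g x, f (g x) x)).
  intros x y Hx Hy E. apply to_nat_inj in E. destruct E as [E1 E2].
  rewrite <- E1 in E2. apply (Hf (g x)); auto.
Qed.

Lemma unc_image {X Y} (P : X -> Prop) (g : X -> Y) : ~ cntb P ->
  (forall x y, P x -> P y -> g x = g y -> x = y) ->
  ~ cntb (fun y => exists x, P x /\ y = g x).
Proof.
  intros H Hg [f Hf]. apply H. exists (fun x => f (g x)).
  intros x y Hx Hy E. apply Hg; auto. apply Hf; eauto.
Qed.

Section Ord.
Variable T : Type.
Variable lt : T -> T -> Prop.
Hypothesis HT : is_omega1 T lt.

Lemma lt_irr x : ~ lt x x. Proof. destruct HT as [H _]. apply H. Qed.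
Lemma lt_trans x y z : lt x y -> lt y z -> lt x z. Proof. destruct HT as [_ [H _]]. apply H. Qed.
Lemma lt_tot x y : lt x y \/ x = y \/ lt y x. Proof. destruct HT as [_ [_ [H _]]]. apply H. Qed.
Lemma lt_wf : well_founded lt. Proof. destruct HT as [_ [_ [_ [H _]]]]. apply H. Qed.
Lemma T_unc : ~ exists f : T -> nat, forall x y, f x = f y -> x = y.
Proof. destruct HT as [_ [_ [_ [_ [H _]]]]]. apply H. Qed.
Lemma seg_cnt a : cntb (fun x => lt x a).
Proof. destruct HT as [_ [_ [_ [_ [_ H]]]]]. apply H. Qed.

Lemma lt_asym x y : lt x y -> ~ lt y x.
Proof. intros H1 H2. apply (lt_irr x). eapply lt_trans; eauto. Qed.
Lemma le_refl x : le T lt x x. Proof. right; auto. Qed.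
Lemma lt_le x y : lt x y -> le T lt x y. Proof. left; auto. Qed.
Lemma le_trans x y z : le T lt x y -> le T lt y z -> le T lt x z.
Proof. intros [H|H] [H'|H']; subst; unfold le; eauto using lt_trans. Qed.
Lemma le_lt_trans x y z : le T lt x y -> lt y z -> lt x z.
Proof. intros [H|H] H'; subst; eauto using lt_trans. Qed.
Lemma lt_le_trans x y z : lt x y -> le T lt y z -> lt x z.
Proof. intros H [H'|H']; subst; eauto using lt_trans. Qed.
Lemma not_lt_le x y : ~ lt x y -> le T lt y x.
Proof. intros H. destruct (lt_tot x y) as [h|[h|h]]; [tauto| subst; apply le_refl | left; auto]. Qed.
Lemma le_not_lt x y : le T lt x y -> ~ lt y x.
Proof. intros [H|H] H'; subst. eapply lt_asym; eauto. eapply lt_irr; eauto. Qed.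
Lemma le_antisym x y : le T lt x y -> le T lt y x -> x = y.
Proof. intros [H|H] H'; auto. exfalso. eapply le_not_lt; eauto. Qed.

Lemma cnt_le a : cntb (fun x => le T lt x a).
Proof.
  destruct (seg_cnt a) as [f Hf].
  exists (fun x => match excluded_middle_informative (x = a) with left _ => 0 | right _ => S (f x) end).
  intros x y Hx Hy E.
  destruct (excluded_middle_informative (x = a)); destruct (excluded_middle_informative (y = a)); try congruence.
  inversion E. apply Hf; auto.
  destruct Hx; congruence. destruct Hy; congruence.
Qed.

Lemma cnt_bounded (P : T -> Prop) : cntb P -> exists b, forall x, P x -> le T lt x b.
Proof.
  intros [f Hf]. apply NNPP. intros Hn.
  assert (Hp : forall b, exists x, P x /\ lt b x).
  { intros b. apply NNPP. intros Hb. apply Hn. exists b. intros x Px.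
    apply not_lt_le. intros h. apply Hb. eauto. }
  set (pick := fun b => proj1_sig (constructive_indefinite_description _ (Hp b))).
  assert (Hpick : forall b, P (pick b) /\ lt b (pick b)).
  { intros b. unfold pick. destruct (constructive_indefinite_description _ (Hp b)). auto. }
  set (h := fun a => proj1_sig (constructive_indefinite_description _ (seg_cnt a))).
  assert (Hh : forall a x y, lt x a -> lt y a -> h a x = h a y -> x = y).
  { intros a. unfold h. destruct (constructive_indefinite_description _ (seg_cnt a)). simpl. auto. }
  apply T_unc. exists (fun y => Cantor.to_nat (f (pick y), h (pick y) y)).
  intros x y E. apply to_nat_inj in E. destruct E as [E1 E2].
  assert (Ep : pick x = pick y) by (apply Hf; auto; apply Hpick).
  rewrite Ep in E2. apply (Hh (pick y)); auto. rewrite <- Ep; apply Hpick. apply Hpick.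
Qed.

Lemma unc_unbounded (P : T -> Prop) : ~ cntb P -> forall b, exists x, P x /\ lt b x.
Proof.
  intros H b. apply NNPP. intros Hn. apply H. apply cnt_sub with (P := fun x => le T lt x b).
  intros x Px. apply not_lt_le. intros h. apply Hn. eauto. apply cnt_le.
Qed.

Lemma T_unbounded b : exists y, lt b y.
Proof.
  destruct (unc_unbounded (fun _ => True)) with (b := b) as [y [_ Hy]]; eauto.
  intros [f Hf]. apply T_unc. exists f. intros; apply Hf; auto.
Qed.

Lemma stationary_unc S : stationary T lt S -> ~ cntb S.
Proof.
  intros Hs Hc. destruct (cnt_bounded S Hc) as [b Hb].
  destruct (Hs (fun x => lt b x)) as [d [Hd Sd]].
  - split.
    + intros a. destruct (lt_tot a b) as [h|[h|h]].
      * destruct (T_unbounded b) as [y Hy]. exists y. split; auto. left. eapply lt_trans; eauto.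
      * subst. destruct (T_unbounded b) as [y Hy]. exists y. split; auto. left; auto.
      * exists a. split; auto. apply le_refl.
    + intros d [[b0 Hb0] _] Hcof. destruct (Hcof b0 Hb0) as [g [Hg1 [_ Hg3]]]. eapply lt_trans; eauto.
  - eapply le_not_lt; eauto.
Qed.

End Ord.
Section Lists.
Variable T : Type.
Variable lt : T -> T -> Prop.
Hypothesis HT : is_omega1 T lt.

Lemma SS_app_inv l1 l2 : StronglySorted lt (l1 ++ l2) ->
  StronglySorted lt l1 /\ StronglySorted lt l2 /\ (forall x y, In x l1 -> In y l2 -> lt x y).
Proof.
  induction l1 as [|a l1 IH]; simpl; intros H.
  - repeat split; auto. constructor. tauto.
  - apply StronglySorted_inv in H. destruct H as [H1 H2]. destruct (IH H1) as [A [B D]].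
    repeat split; auto.
    + constructor; auto. rewrite Forall_forall in *. intros x Hx. apply H2. apply in_or_app; auto.
    + intros x y [->|Hx] Hy; auto. rewrite Forall_forall in H2. apply H2. apply in_or_app; auto.
Qed.

Lemma SS_NoDup L : StronglySorted lt L -> NoDup L.
Proof.
  induction L as [|a l IH]; intros H; constructor.
  - apply StronglySorted_inv in H. destruct H as [_ H]. rewrite Forall_forall in H.
    intros Ha. apply (lt_irr T lt HT a). auto.
  - apply IH. apply StronglySorted_inv in H. tauto.
Qed.

Lemma SS_filter f L : StronglySorted lt L -> StronglySorted lt (filter f L).
Proof.
  induction L as [|a l IH]; simpl; intros H; auto.
  apply StronglySorted_inv in H. destruct H as [H1 H2].
  destruct (f a); auto. constructor; auto. rewrite Forall_forall in *.
  intros x Hx. apply filter_In in Hx. apply H2. tauto.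
Qed.

Lemma SS_unique L L' : StronglySorted lt L -> StronglySorted lt L' ->
  (forall x, In x L <-> In x L') -> L = L'.
Proof.
  revert L'. induction L as [|a l IH]; intros L' H H' E.
  - destruct L' as [|b l']; auto. exfalso. apply (E b). simpl; auto.
  - destruct L' as [|b l']. exfalso. apply (E a). simpl; auto.
    apply StronglySorted_inv in H. apply StronglySorted_inv in H'.
    destruct H as [H1 H2]. destruct H' as [H1' H2']. rewrite Forall_forall in *.
    assert (ab : a = b).
    { destruct (proj1 (E a) (or_introl eq_refl)) as [h|h]; auto.
      destruct (proj2 (E b) (or_introl eq_refl)) as [h'|h']; auto.
      exfalso. apply (lt_asym T lt HT a b); auto. }
    subst b. f_equal. apply IH; auto. intros x. split; intros Hx.
    + destruct (proj1 (E x) (or_intror Hx)) as [h|h]; auto. subst.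
      exfalso. apply (lt_irr T lt HT x). auto.
    + destruct (proj2 (E x) (or_intror Hx)) as [h|h]; auto. subst.
      exfalso. apply (lt_irr T lt HT x). auto.
Qed.

Lemma SS_skipn_nth L a d y : StronglySorted lt L -> a < length L -> In y (skipn a L) ->
  le T lt (nth a L d) y.
Proof.
  revert a. induction L as [|b l IH]; intros a H Ha Hy; simpl in *. lia.
  apply StronglySorted_inv in H. destruct H as [H1 H2]. rewrite Forall_forall in H2.
  destruct a as [|a].
  - destruct Hy as [->|Hy]. apply le_refl. left; auto.
  - apply IH; auto. lia.
Qed.

Lemma firstn_S_nth (L : list T) j d : j < length L -> firstn (S j) L = firstn j L ++ [nth j L d].
Proof.
  revert j. induction L as [|b l IH]; intros j Hj; simpl in *. lia.
  destruct j; simpl; auto. rewrite <- IH by lia. auto.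
Qed.

Lemma filter_map_eq {A} (f g : A -> bool) L : map f L = map g L -> filter f L = filter g L.
Proof.
  induction L as [|a l IH]; simpl; intros H; auto. inversion H as [[H1 H2]].
  rewrite H1, (IH H2). destruct (g a); auto.
Qed.

Lemma filter_length_map {A} (f : A -> bool) L : length (filter f L) = length (filter (fun b => b) (map f L)).
Proof. induction L as [|a l IH]; simpl; auto. destruct (f a); simpl; auto. Qed.

End Lists.
Definition leb_ {T} (lt : T -> T -> Prop) (x a : T) : bool :=
  if excluded_middle_informative (le T lt x a) then true else false.
Definition inb_ {T} (y : T) (R : list T) : bool :=
  if excluded_middle_informative (In y R) then true else false.

Lemma leb_true {T} lt (x a : T) : leb_ lt x a = true <-> le T lt x a.
Proof. unfold leb_. destruct (excluded_middle_informative _); split; auto; discriminate. Qed.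
Lemma inb_true {T} (x : T) R : inb_ x R = true <-> In x R.
Proof. unfold inb_. destruct (excluded_middle_informative _); split; auto; discriminate. Qed.

Section Scheme.
Variable T : Type.
Variable lt : T -> T -> Prop.
Hypothesis HT : is_omega1 T lt.
Variables (m ns rs : nat -> nat) (F : list T -> Prop).
Hypothesis Htype : is_type m ns rs.
Hypothesis HF : scheme T lt m ns rs F.

Local Notation Fk' := (Fk T m F).
Local Notation canon' := (canon T lt m ns rs F).

Lemma sch_canon k G : Fk' (S k) G -> exists R P, canon' (S k) G R P.
Proof. destruct HF as [_ [_ [_ H]]]. apply H. Qed.
Lemma sch_init k E G : Fk' k E -> Fk' k G -> inter_init T lt E G.
Proof. destruct HF as [_ [_ [H _]]]. intros. apply (H k E G); auto. Qed.
Lemma sch_sorted L : F L -> StronglySorted lt L.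
Proof. destruct HF as [H _]. intros h. apply H; auto. Qed.
Lemma Fk_sorted k L : Fk' k L -> StronglySorted lt L.
Proof. intros [h _]. apply sch_sorted; auto. Qed.

Lemma initseg j K : j <= K -> forall E H, Fk' j E -> Fk' K H -> inter_init T lt E H.
Proof.
  induction 1 as [|K HjK IH]; intros E H HE HH.
  - eapply sch_init; eauto.
  - destruct (sch_canon _ _ HH) as [R [P [_ [_ [HP [HG _]]]]]].
    intros x y Hx Hy HyH Hxy. apply HG in HyH. destruct HyH as [i [Hi Hyi]]. apply HG. exists i. split; auto.
    assert (HPi := HP i Hi). replace (S K - 1) with K in HPi by lia.
    apply (IH E (P i) HE HPi x y); auto.
Qed.

Lemma clos_char k G a : Fk' k G -> In a G -> forall x, clos T lt m F a k x <-> le T lt x a /\ In x G.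
Proof.
  intros HG Ha x. split.
  - intros [Hle [j [Hj [E [HE [Hx HaE]]]]]]. split; auto.
    destruct Hle as [Hlt|Heq]; [|subst; auto].
    apply (initseg j k Hj E G HE HG x a); auto.
  - intros [Hle Hx]. split; auto. exists k. split; auto. exists G. auto.
Qed.

Lemma clos_rep k G a : Fk' k G -> In a G -> exists L, rep T lt L (clos T lt m F a k).
Proof.
  intros HG Ha. exists (filter (fun x => leb_ lt x a) G). split.
  - apply (SS_filter T lt). eapply Fk_sorted; eauto.
  - intros x. rewrite filter_In, leb_true, (clos_char k G a HG Ha). tauto.
Qed.

Section Canon.
Variables (l : nat) (G R : list T) (P : nat -> list T).
Hypothesis HG : Fk' l G.
Hypothesis HC : canon' l G R P.

Lemma c_l : 1 <= l. Proof. apply HC. Qed.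
Lemma c_len : length R = rs l. Proof. apply HC. Qed.
Lemma c_P i : i < ns l -> Fk' (l - 1) (P i). Proof. apply HC. Qed.
Lemma c_G x : In x G <-> exists i, i < ns l /\ In x (P i). Proof. apply HC. Qed.
Lemma c_2 : 2 <= ns l. Proof. apply HC. Qed.
Lemma c_Rsorted : StronglySorted lt R. Proof. apply HC. Qed.
Lemma c_disj i j x : i < ns l -> j < ns l -> i <> j -> In x (P i) -> In x (P j) -> In x R.
Proof. intros. destruct HC as [_ [_ [_ [_ [_ [_ [_ [Hq _]]]]]]]]. apply (Hq i j); auto. Qed.
Lemma c_Rsub i x : i < ns l -> In x R -> In x (P i).
Proof.
  intros Hi Hx. destruct HC as [_ [_ [_ [_ [H2 [_ [_ [Hh _]]]]]]]].
  destruct (Nat.eq_dec i 0) as [->|ne].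
  - apply (Hh 0 1); auto; lia.
  - apply (Hh i 0); auto; lia.
Qed.
Lemma c_rootlt i x y : i < ns l -> In x R -> In y (P i) -> ~ In y R -> lt x y.
Proof. intros. destruct HC as [_ [_ [_ [_ [_ [_ [_ [_ [Hq _]]]]]]]]]. eapply Hq; eauto. Qed.
Lemma c_tails i j x y : i < j -> j < ns l -> In x (P i) -> ~ In x R -> In y (P j) -> ~ In y R -> lt x y.
Proof. intros. destruct HC as [_ [_ [_ [_ [_ [_ [_ [_ [_ Hq]]]]]]]]]. eapply (Hq i j); eauto. Qed.
Lemma c_inG i x : i < ns l -> In x (P i) -> In x G.
Proof. intros. apply c_G. eauto. Qed.
Lemma c_RinG x : In x R -> In x G.
Proof. intros. apply (c_inG 0). pose proof c_2; lia. apply c_Rsub; auto. pose proof c_2; lia. Qed.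
Lemma c_Gsorted : StronglySorted lt G. Proof. eapply Fk_sorted; eauto. Qed.

Lemma rho_pieces i j x y : i < j -> j < ns l -> In x (P i) -> ~ In x R -> In y (P j) -> ~ In y R ->
  rho_eq T m F x y l.
Proof.
  intros Hij Hj Hx Hx' Hy Hy'. split.
  - exists G. split; auto. split; [apply (c_inG i); auto; lia | apply (c_inG j); auto].
  - intros j' Hj' [E [HE [HxE HyE]]]. apply Hx'. apply (c_disj i j x); auto; try lia.
    assert (HPj := c_P j Hj).
    apply (initseg j' (l - 1) ltac:(lia) E (P j) HE HPj x y); auto.
    apply (c_tails i j x y); auto.
Qed.

Definition tl_ j := filter (fun y => negb (inb_ y R)) (P j).
Fixpoint U_ i := match i with 0 => R | S i' => U_ i' ++ tl_ i' end.

Lemma tl_In j y : In y (tl_ j) <-> In y (P j) /\ ~ In y R.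
Proof.
  unfold tl_. rewrite filter_In. rewrite <- (inb_true y R). destruct (inb_ y R); simpl; split; intros [h1 h2]; split; auto; try discriminate; exfalso; auto.
Qed.

Lemma tl_len j : j < ns l -> length (tl_ j) = m (l - 1) - rs l.
Proof.
  intros Hj. assert (HPj := c_P j Hj).
  assert (ND : NoDup (P j)) by (apply (SS_NoDup T lt HT); eapply Fk_sorted; eauto).
  assert (NDR : NoDup R) by (apply (SS_NoDup T lt HT); apply c_Rsorted).
  assert (Pm : Permutation (P j) (R ++ tl_ j)).
  { apply NoDup_Permutation; auto.
    - apply NoDup_app; auto. unfold tl_. apply NoDup_filter; auto.
      intros a Ha Ht. apply tl_In in Ht. tauto.
    - intros y. rewrite in_app_iff, tl_In. split.
      + intros h. destruct (classic (In y R)); tauto.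
      + intros [h|h]. apply c_Rsub; auto. tauto. }
  apply Permutation_length in Pm. rewrite length_app in Pm. destruct HPj as [_ HPl].
  rewrite c_len in Pm. lia.
Qed.

Lemma U_props i : i <= ns l -> NoDup (U_ i) /\ length (U_ i) = rs l + i * (m (l - 1) - rs l) /\
  (forall y, In y (U_ i) <-> In y R \/ exists j, j < i /\ In y (P j) /\ ~ In y R).
Proof.
  induction i as [|i IH]; intros Hi; simpl.
  - split. apply (SS_NoDup T lt HT); apply c_Rsorted. split. rewrite c_len; lia.
    intros y. split; [tauto|]. intros [h|[j [Hj _]]]; auto. lia.
  - destruct (IH ltac:(lia)) as [A [B D]]. split; [|split].
    + apply NoDup_app; auto. unfold tl_. apply NoDup_filter.
      apply (SS_NoDup T lt HT); eapply Fk_sorted; apply c_P; lia.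
      intros a Ha Ht. apply tl_In in Ht. apply D in Ha. destruct Ha as [Ha|[j [Hj [Ha1 Ha2]]]]; [tauto|].
      apply Ha2. apply (c_disj j i a); auto; try lia; tauto.
    + rewrite length_app, B, tl_len by lia. lia.
    + intros y. rewrite in_app_iff, D, tl_In. split.
      * intros [[h|[j [Hj h]]]|h]; auto. right; exists j; split; auto. right; exists i; split; auto.
      * intros [h|[j [Hj h]]]; auto. destruct (Nat.eq_dec j i); subst; auto.
        left; right; exists j; split; auto. lia.
Qed.

Definition cntle x := length (filter (fun y => leb_ lt y x) G).

Lemma cnt_root x : In x R -> cntle x <= rs l.
Proof.
  intros Hx. unfold cntle. rewrite <- c_len. apply NoDup_incl_length.
  apply NoDup_filter, (SS_NoDup T lt HT), c_Gsorted.
  intros y Hy. apply filter_In in Hy. destruct Hy as [Hy Hle]. apply leb_true in Hle.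
  apply c_G in Hy. destruct Hy as [i [Hi Hyi]]. apply NNPP. intros Hn.
  apply (le_not_lt T lt HT y x); auto. eapply c_rootlt; eauto.
Qed.

Lemma cnt_piece i x : i < ns l -> In x (P i) -> ~ In x R ->
  rs l + i * (m (l - 1) - rs l) < cntle x <= rs l + S i * (m (l - 1) - rs l).
Proof.
  intros Hi Hx Hx'. unfold cntle. split.
  - destruct (U_props i ltac:(lia)) as [A [B D]]. rewrite <- B.
    apply (@NoDup_incl_length T (x :: U_ i)).
    + constructor; auto. intros h. apply D in h. destruct h as [h|[j [Hj [h1 h2]]]]; auto.
      apply Hx'. apply (c_disj j i x); auto; lia.
    + intros y Hy. apply filter_In. rewrite leb_true. destruct Hy as [<-|Hy].
      * split. eapply c_inG; eauto. apply le_refl.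
      * apply D in Hy. destruct Hy as [Hy|[j [Hj [h1 h2]]]].
        -- split. apply c_RinG; auto. left. eapply c_rootlt; eauto.
        -- split. apply (c_inG j); auto. lia. left. eapply (c_tails j i); eauto.
  - destruct (U_props (S i) ltac:(lia)) as [A [B D]]. rewrite <- B.
    apply NoDup_incl_length.
    apply NoDup_filter, (SS_NoDup T lt HT), c_Gsorted.
    intros y Hy. apply filter_In in Hy. destruct Hy as [Hy Hle]. apply leb_true in Hle.
    apply D. apply c_G in Hy. destruct Hy as [j [Hj Hyj]].
    destruct (classic (In y R)) as [h|h]; auto. right. exists j. split; auto.
    destruct (Nat.lt_ge_cases i j) as [c|c]; [|lia]. exfalso.
    apply (le_not_lt T lt HT y x); auto. eapply (c_tails i j); eauto.
Qed.

End Canon.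

Lemma cnt_eq l G G' x : Fk' l G -> Fk' l G' -> In x G -> In x G' -> cntle G x = cntle G' x.
Proof.
  intros HG HG' Hx Hx'. unfold cntle. apply Permutation_length. apply NoDup_Permutation.
  apply NoDup_filter, (SS_NoDup T lt HT); eapply Fk_sorted; eauto.
  apply NoDup_filter, (SS_NoDup T lt HT); eapply Fk_sorted; eauto.
  intros y. rewrite !filter_In, leb_true. split; intros [Hy Hle]; split; auto.
  - destruct Hle as [h|h]; [|subst; auto]. apply (sch_init l G G' HG HG' y x); auto.
  - destruct Hle as [h|h]; [|subst; auto]. apply (sch_init l G' G HG' HG y x); auto.
Qed.

Lemma type_pos l : 1 <= l -> rs l < m (l - 1).
Proof. intros H. destruct l. lia. replace (S l - 1) with l by lia. apply Htype. Qed.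

Lemma Xi_root l G R P x : Fk' l G -> canon' l G R P -> In x R -> Xi_eq T lt m ns rs F x l (-1)%Z.
Proof.
  intros HG HC Hx. split.
  - exists G. split; auto. eapply c_RinG; eauto.
  - intros G' R' P' HG' HxG' HC'. destruct (classic (In x R')) as [h|h]; [left; auto|].
    exfalso. apply (c_G l G' R' P' HC') in HxG'. destruct HxG' as [i [Hi Hxi]].
    pose proof (cnt_piece l G' R' P' HG' HC' i x Hi Hxi h).
    pose proof (cnt_root l G R P HG HC x Hx).
    rewrite (cnt_eq l G G' x HG HG') in *; auto. lia. eapply c_RinG; eauto. eapply c_inG; eauto.
Qed.

Lemma Xi_piece l G R P i x : Fk' l G -> canon' l G R P -> i < ns l -> In x (P i) -> ~ In x R ->
  Xi_eq T lt m ns rs F x l (Z.of_nat i).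
Proof.
  intros HG HC Hi Hx Hx'. assert (HxG : In x G) by (eapply c_inG; eauto). split.
  - exists G. split; auto.
  - intros G' R' P' HG' HxG' HC'. pose proof (cnt_eq l G G' x HG HG' HxG HxG') as E.
    pose proof (cnt_piece l G R P HG HC i x Hi Hx Hx') as B.
    pose proof (type_pos l (c_l l G R P HC)) as Hp.
    destruct (classic (In x R')) as [h|h].
    + exfalso. pose proof (cnt_root l G' R' P' HG' HC' x h). lia.
    + right. apply (c_G l G' R' P' HC') in HxG'. destruct HxG' as [i' [Hi' Hxi]].
      exists i'. repeat split; auto. f_equal.
      pose proof (cnt_piece l G' R' P' HG' HC' i' x Hi' Hxi h) as B'.
      rewrite E in B. set (K := m (l - 1) - rs l) in *. assert (0 < K) by lia.
      destruct (Nat.lt_total i i') as [c|[c|c]]; auto; exfalso.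
      * assert (S i * K <= i' * K) by (apply Nat.mul_le_mono_r; lia). lia.
      * assert (S i' * K <= i * K) by (apply Nat.mul_le_mono_r; lia). lia.
Qed.

End Scheme.
Section Assemble.
Variable T : Type.
Variable lt : T -> T -> Prop.
Hypothesis HT : is_omega1 T lt.
Variables (m ns rs : nat -> nat) (F : list T -> Prop).
Hypothesis Htype : is_type m ns rs.
Hypothesis HF : scheme T lt m ns rs F.

Lemma in_app_cases (x : T) (Rs w : list T) : In x (Rs ++ w) -> In x Rs \/ In x w.
Proof. apply in_app_or. Qed.

Lemma assemble l G RF P nn Rs (s w : nat -> list T) :
  Fk T m F l G -> canon T lt m ns rs F l G RF P -> 2 <= nn -> nn <= ns l ->
  (forall i, i < nn -> s i = Rs ++ w i) ->
  (forall i, i < nn -> StronglySorted lt (s i)) ->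
  (forall i, i < nn -> length (w i) = length (w 0)) ->
  (forall x, In x Rs -> In x RF) ->
  (forall i x, i < nn -> In x (w i) -> In x (P i) /\ ~ In x RF) ->
  rtt_seq T lt nn s Rs /\ captured T lt m ns rs F nn s Rs l.
Proof.
  intros HG HC H2 Hnn H1 Hs Hw HR Hwi.
  assert (Hsplit : forall i x, i < nn -> In x (s i) -> In x Rs \/ (In x (P i) /\ ~ In x RF)).
  { intros i x Hi Hx. rewrite H1 in Hx by auto. apply in_app_or in Hx. destruct Hx as [h|h]; auto. }
  split.
  - split; [auto|]. split; [|split; [|split; [|split]]].
    + assert (h := Hs 0 ltac:(lia)). rewrite H1 in h by lia. apply (SS_app_inv T lt) in h. tauto.
    + intros i Hi. split; auto. rewrite !H1 by lia. rewrite !length_app, Hw by auto. auto.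
    + intros i j Hi Hj Hij x. split.
      * intros [hi hj]. destruct (Hsplit i x Hi hi) as [h|[h1 h2]]; auto.
        destruct (Hsplit j x Hj hj) as [h'|[h1' h2']]. exfalso; auto.
        exfalso. apply h2. apply (c_disj T lt m ns rs F l G RF P HC i j x); auto; lia.
      * intros h. rewrite !H1 by auto. split; apply in_or_app; auto.
    + intros i Hi x y Hx Hy Hy'. destruct (Hsplit i y Hi Hy) as [h|[h1 h2]]; [tauto|].
      apply (c_rootlt T lt m ns rs F l G RF P HC i x y); auto. lia.
    + intros i j Hij Hj x y Hx Hx' Hy Hy'.
      destruct (Hsplit i x ltac:(lia) Hx) as [h|[h1 h2]]; [tauto|].
      destruct (Hsplit j y Hj Hy) as [h'|[h1' h2']]; [tauto|].
      apply (c_tails T lt m ns rs F l G RF P HC i j x y); auto. lia.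
  - split; [apply (c_l T lt m ns rs F l G RF P HC)|]. split; auto. split.
    + intros i a x Hi Ha. rewrite H1 in Ha by auto.
      destruct (Nat.ltb_spec a (length Rs)) as [c|c].
      * rewrite nth_error_app1 in Ha by auto. apply nth_error_In in Ha.
        apply (Xi_root T lt HT m ns rs F HF l G RF P); auto.
      * rewrite nth_error_app2 in Ha by auto. apply nth_error_In in Ha.
        destruct (Hwi i x Hi Ha) as [h1 h2].
        apply (Xi_piece T lt HT m ns rs F Htype HF l G RF P i); auto. lia.
    + intros i j a x y Hij Hj Ha Hx Hy. rewrite H1 in Hx, Hy by lia.
      rewrite nth_error_app2 in Hx, Hy by auto. apply nth_error_In in Hx. apply nth_error_In in Hy.
      destruct (Hwi i x ltac:(lia) Hx). destruct (Hwi j y Hj Hy).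
      apply (rho_pieces T lt m ns rs F HF l G RF P HG HC i j); auto. lia.
Qed.

End Assemble.
Lemma cnt_image {X Y} (P : X -> Prop) (g : X -> Y) : cntb P ->
  cntb (fun y => exists x, P x /\ y = g x).
Proof.
  intros [f Hf]. destruct (classic (exists x : X, True)) as [[x0 _]|Hne].
  - exists (fun y => f (epsilon (inhabits x0) (fun x => P x /\ y = g x))).
    intros y y' Hy Hy' E.
    pose proof (epsilon_spec (inhabits x0) (fun x => P x /\ y = g x) Hy) as [A1 A2].
    pose proof (epsilon_spec (inhabits x0) (fun x => P x /\ y' = g x) Hy') as [B1 B2].
    rewrite A2, B2. f_equal. apply Hf; auto.
  - exists (fun _ => 0). intros y y' [x _]. exfalso. apply Hne. eauto.
Qed.

Section Delta.
Variable T : Type.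
Variable lt : T -> T -> Prop.
Hypothesis HT : is_omega1 T lt.
Variable d0 : T.

Lemma SS_last L x : StronglySorted lt L -> In x L -> le T lt x (last L d0).
Proof.
  revert x. induction L as [|a l IH]; intros x H Hx. destruct Hx.
  apply StronglySorted_inv in H. destruct H as [H1 H2]. rewrite Forall_forall in H2.
  destruct l as [|b l].
  - destruct Hx as [<-|[]]. apply le_refl.
  - change (last (a :: b :: l) d0) with (last (b :: l) d0).
    destruct Hx as [<-|Hx].
    + left. apply (lt_le_trans T lt HT a b). apply H2; simpl; auto. apply IH; simpl; auto.
    + apply IH; auto.
Qed.

Variable Fam : list T -> Prop.
Variable m0 : nat.
Hypothesis HFam : forall L, Fam L -> StronglySorted lt L /\ length L = m0.

Lemma deltaA k : forall j R Famj, m0 - j = k -> j <= m0 -> length R = j ->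
  (forall L, Famj L -> Fam L) -> ~ cntb Famj -> (forall L, Famj L -> firstn j L = R) ->
  exists a0 R' Fam1, a0 < m0 /\ length R' = a0 /\ (forall L, Fam1 L -> Fam L) /\ ~ cntb Fam1 /\
    (forall L, Fam1 L -> firstn a0 L = R') /\ (forall b, exists L, Fam1 L /\ lt b (nth a0 L d0)).
Proof.
  induction k as [|k IH]; intros j R Famj Hk Hj HR Hsub Hunc Hpre.
  - exfalso. apply Hunc. apply (cnt_single R). intros L HL. rewrite <- (Hpre L HL).
    symmetry. apply firstn_all2. destruct (HFam L (Hsub L HL)) as [_ ->]. lia.
  - destruct (classic (forall b, exists L, Famj L /\ lt b (nth j L d0))) as [Hub|Hb].
    + exists j, R, Famj. repeat split; auto. lia.
    + assert (Hb' : exists b, forall L, Famj L -> le T lt (nth j L d0) b).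
      { apply NNPP. intros Hn. apply Hb. intros b. apply NNPP. intros Hn2. apply Hn. exists b.
        intros L HL. apply not_lt_le; auto. intros h. apply Hn2. eauto. }
      destruct Hb' as [b Hbb]. destruct (cnt_le T lt HT b) as [h Hh].
      destruct (pigeon Famj (fun L => h (nth j L d0)) Hunc) as [c Hc].
      destruct (unc_nonempty _ Hc) as [L1 [HL1 HL1c]].
      assert (Hv : forall L, Famj L /\ h (nth j L d0) = c -> nth j L d0 = nth j L1 d0).
      { intros L [HL HLc]. apply Hh; auto. congruence. }
      apply (IH (S j) (R ++ [nth j L1 d0]) (fun L => Famj L /\ h (nth j L d0) = c)); auto.
      * lia.
      * lia.
      * rewrite length_app; simpl; lia.
      * intros L [HL _]. auto.
      * intros L HL. rewrite (firstn_S_nth T L j d0).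
        rewrite (Hpre L (proj1 HL)), (Hv L HL). auto.
        destruct (HFam L (Hsub L (proj1 HL))) as [_ ->]. lia.
Qed.

Section Choose.
Variable Fam1 : list T -> Prop.
Variable a0 : nat.
Hypothesis Hub : forall b, exists L, Fam1 L /\ lt b (nth a0 L d0).
Hypothesis Hsorted : forall L, Fam1 L -> StronglySorted lt L.

Definition V_ v := exists L, Fam1 L /\ nth a0 L d0 = v.
Definition M_ v := epsilon (inhabits nil) (fun L => Fam1 L /\ nth a0 L d0 = v).
Lemma M_spec v : V_ v -> Fam1 (M_ v) /\ nth a0 (M_ v) d0 = v.
Proof. intros H. apply (epsilon_spec (inhabits nil) (fun L => Fam1 L /\ nth a0 L d0 = v) H). Qed.

Definition chosen : T -> Prop :=
  Fix (lt_wf T lt HT) (fun _ => Prop)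
    (fun v rec => V_ v /\ forall u (h : lt u v), rec u h -> lt (last (M_ u) d0) v).

Lemma chosen_eq v : chosen v <-> V_ v /\ forall u, lt u v -> chosen u -> lt (last (M_ u) d0) v.
Proof.
  unfold chosen at 1. rewrite Fix_eq.
  - fold chosen. split; intros [A B]; split; auto.
  - intros x f g Hfg. assert (E : f = g).
    { apply functional_extensionality_dep. intros y. apply functional_extensionality_dep. intros p. auto. }
    rewrite E. auto.
Qed.

Lemma chosen_unbounded b : exists v, chosen v /\ lt b v.
Proof.
  apply NNPP. intros Hn.
  assert (Hle : forall v, chosen v -> le T lt v b).
  { intros v Hv. apply not_lt_le; auto. intros h. apply Hn. eauto. }
  assert (Hc : cntb chosen) by (eapply cnt_sub; [exact Hle| apply cnt_le; auto]).
  destruct (cnt_bounded T lt HT _ (cnt_image chosen (fun u => last (M_ u) d0) Hc)) as [c Hcb].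
  assert (He : exists e, le T lt b e /\ le T lt c e).
  { destruct (lt_tot T lt HT b c) as [h|[h|h]].
    - exists c. split. left; auto. apply le_refl.
    - subst. exists c. split; apply le_refl.
    - exists b. split. apply le_refl. left; auto. }
  destruct He as [e [Hbe Hce]].
  destruct (Hub e) as [L [HL HLe]].
  set (v := nth a0 L d0) in *.
  assert (Hcv : chosen v).
  { apply chosen_eq. split. exists L; auto.
    intros u Hu Hcu. apply (le_lt_trans T lt HT _ c). apply Hcb. eauto.
    apply (le_lt_trans T lt HT _ e); auto. }
  apply (le_not_lt T lt HT v b (Hle v Hcv)). apply (le_lt_trans T lt HT _ e); auto.
Qed.

Definition Fam2_ L := exists v, chosen v /\ L = M_ v.

Lemma Fam2_sub L : Fam2_ L -> Fam1 L.
Proof. intros [v [Hv ->]]. apply chosen_eq in Hv. apply M_spec. tauto. Qed.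

Lemma Fam2_unc : ~ cntb Fam2_.
Proof.
  apply unc_image.
  - intros Hc. destruct (cnt_bounded T lt HT _ Hc) as [b Hb].
    destruct (chosen_unbounded b) as [v [Hv Hbv]]. apply (le_not_lt T lt HT v b); auto.
  - intros u v Hu Hv E. apply chosen_eq in Hu. apply chosen_eq in Hv.
    rewrite <- (proj2 (M_spec u (proj1 Hu))), <- (proj2 (M_spec v (proj1 Hv))). congruence.
Qed.

Lemma Fam2_ord L L' : Fam2_ L -> Fam2_ L' -> L <> L' ->
  (forall x, In x L -> lt x (nth a0 L' d0)) \/ (forall x, In x L' -> lt x (nth a0 L d0)).
Proof.
  intros [u [Hu ->]] [v [Hv ->]] Hne.
  pose proof Hu as Hu'. pose proof Hv as Hv'.
  apply chosen_eq in Hu'. apply chosen_eq in Hv'.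
  destruct (M_spec u (proj1 Hu')) as [Mu1 Mu2]. destruct (M_spec v (proj1 Hv')) as [Mv1 Mv2].
  destruct (lt_tot T lt HT u v) as [h|[h|h]].
  - left. intros x Hx. rewrite Mv2. apply (le_lt_trans T lt HT _ (last (M_ u) d0)).
    apply SS_last; auto. apply (proj2 Hv'); auto.
  - subst. tauto.
  - right. intros x Hx. rewrite Mu2. apply (le_lt_trans T lt HT _ (last (M_ v) d0)).
    apply SS_last; auto. apply (proj2 Hu'); auto.
Qed.

End Choose.

Lemma delta_system : ~ cntb Fam ->
  exists a0 R Fam2, a0 < m0 /\ length R = a0 /\ (forall L, Fam2 L -> Fam L) /\ ~ cntb Fam2 /\
    (forall L, Fam2 L -> firstn a0 L = R) /\
    (forall L L', Fam2 L -> Fam2 L' -> L <> L' ->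
       (forall x, In x L -> lt x (nth a0 L' d0)) \/ (forall x, In x L' -> lt x (nth a0 L d0))).
Proof.
  intros Hunc.
  destruct (deltaA (m0 - 0) 0 nil Fam) as [a0 [R [Fam1 [H1 [H2 [H3 [H4 [H5 H6]]]]]]]]; auto; try lia.
  exists a0, R, (Fam2_ Fam1 a0). split; auto. split; auto. split; [|split; [|split]].
  - intros L HL. apply H3. exact (Fam2_sub Fam1 a0 L HL).
  - apply Fam2_unc; auto.
  - intros L HL. apply H5. exact (Fam2_sub Fam1 a0 L HL).
  - intros L L' HL HL' Hne. apply (Fam2_ord Fam1 a0); auto.
    intros L0 HL0. apply HFam. apply H3; auto.
Qed.

End Delta.
Lemma last_In_ {A} (l : list A) d : l <> [] -> In (last l d) l.
Proof.
  induction l as [|a l IH]; intros H. congruence.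
  destruct l as [|b l]. simpl; auto. change (last (a :: b :: l) d) with (last (b :: l) d).
  right. apply IH. discriminate.
Qed.

Lemma in_skipn_ {A} (l : list A) k x : In x (skipn k l) -> In x l.
Proof. intros H. rewrite <- (firstn_skipn k l). apply in_or_app; auto. Qed.

Lemma app_len_inv {A} (l1 l2 l1' l2' : list A) : length l1 = length l1' -> l1 ++ l2 = l1' ++ l2' -> l1 = l1'.
Proof.
  revert l1'. induction l1 as [|a l1 IH]; intros [|b l1'] Hl E; simpl in *; try congruence.
  inversion E. f_equal. apply IH; auto.
Qed.

Lemma unc_super {X} (Z Y : X -> Prop) : (forall x, Z x -> Y x) -> ~ cntb Z -> ~ cntb Y.
Proof. intros H Hz Hy. apply Hz. eapply cnt_sub; eauto. Qed.

Section Club.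
Variable T : Type.
Variable lt : T -> T -> Prop.
Hypothesis HT : is_omega1 T lt.
Variable C : T -> T -> Prop.
Hypothesis HC : clubsuit T lt C.

Lemma club_iter n (X : T -> Prop) : ~ cntb X ->
  ~ cntb (fun d => LimN T lt C n d /\ forall xi, Cn T C n d xi -> X xi).
Proof.
  destruct HC as [_ HS].
  induction n as [|n IH]; intros HX.
  - apply (unc_super (fun d => is_lim T lt d /\ forall x, C d x -> X x)).
    + intros d [A B]. split; auto.
    + apply (stationary_unc T lt HT). apply HS. exact HX.
  - apply (unc_super (fun d => is_lim T lt d /\ forall x, C d x ->
        (LimN T lt C n x /\ forall xi, Cn T C n x xi -> X xi))).
    + intros d [A B]. split. split; auto. intros x Hx. apply B; auto.
      intros xi [x [Hx Hxi]]. apply (B x Hx); auto.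
    + apply (stationary_unc T lt HT). apply HS. apply IH; auto.
Qed.

Lemma Cn_lt n d x : LimN T lt C n d -> Cn T C n d x -> lt x d.
Proof.
  destruct HC as [HC1 _].
  revert d x. induction n as [|n IH]; intros d x Hd Hx; simpl in *.
  - apply (HC1 d Hd). auto.
  - destruct Hd as [Hd1 Hd2]. destruct Hx as [xi [Hxi Hx]].
    apply (lt_trans T lt HT _ xi). apply IH; auto. apply (HC1 d Hd1). auto.
Qed.

Lemma Cn_two n d : LimN T lt C n d -> exists x y, Cn T C n d x /\ Cn T C n d y /\ lt x y.
Proof.
  destruct HC as [HC1 _].
  revert d. induction n as [|n IH]; intros d Hd; simpl in *.
  - destruct (HC1 d Hd) as [A [_ B]]. destruct Hd as [[b Hb] _].
    destruct (B b Hb) as [g1 [Hg1 _]]. destruct (B g1 (A g1 Hg1)) as [g2 [Hg2 H12]].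
    exists g1, g2. auto.
  - destruct Hd as [Hd1 Hd2]. destruct (HC1 d Hd1) as [A [_ B]]. destruct Hd1 as [[b Hb] Hb'].
    destruct (B b Hb) as [xi [Hxi _]]. destruct (IH xi (Hd2 xi Hxi)) as [x [y [Hx [Hy Hxy]]]].
    exists x, y. split; [|split]; auto; exists xi; auto.
Qed.

End Club.

Section RttFam.
Variable T : Type.
Variable lt : T -> T -> Prop.
Hypothesis HT : is_omega1 T lt.
Variable d0 : T.
Variables (Fam2 : list T -> Prop) (a0 m0 : nat) (R : list T).
Hypothesis HF2 : forall L, Fam2 L -> StronglySorted lt L /\ length L = m0.
Hypothesis Ha0 : a0 < m0.
Hypothesis Hpre : forall L, Fam2 L -> firstn a0 L = R.
Hypothesis Hord : forall L L', Fam2 L -> Fam2 L' -> L <> L' ->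
  (forall x, In x L -> lt x (nth a0 L' d0)) \/ (forall x, In x L' -> lt x (nth a0 L d0)).

Lemma f2_dec L : Fam2 L -> L = R ++ skipn a0 L.
Proof. intros H. rewrite <- (Hpre L H). symmetry. apply firstn_skipn. Qed.

Lemma f2_tail L y : Fam2 L -> In y (skipn a0 L) -> le T lt (nth a0 L d0) y.
Proof. intros H Hy. apply SS_skipn_nth; auto. apply HF2; auto. destruct (HF2 L H) as [_ ->]. auto. Qed.

Lemma f2_Rt L x y : Fam2 L -> In x R -> In y (skipn a0 L) -> lt x y.
Proof.
  intros H Hx Hy. destruct (HF2 L H) as [Hs _]. rewrite (f2_dec L H) in Hs.
  apply (SS_app_inv T lt) in Hs. destruct Hs as [_ [_ Hs]]. auto.
Qed.

Lemma f2_In L x : Fam2 L -> (In x L <-> In x R \/ In x (skipn a0 L)).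
Proof. intros H. rewrite (f2_dec L H) at 1. rewrite in_app_iff. tauto. Qed.

Lemma f2_Rsorted L : Fam2 L -> StronglySorted lt R.
Proof.
  intros H. destruct (HF2 L H) as [Hs _]. rewrite (f2_dec L H) in Hs.
  apply (SS_app_inv T lt) in Hs. tauto.
Qed.

Lemma f2_tail_notR L x : Fam2 L -> In x (skipn a0 L) -> ~ In x R.
Proof. intros H Hx HR. apply (lt_irr T lt HT x). apply (f2_Rt L); auto. Qed.

Lemma rtt_from_fam2 (Phi : list T -> Prop) : (forall L, Phi L -> Fam2 L) ->
  (exists L1 L2, Phi L1 /\ Phi L2 /\ L1 <> L2) -> rtt_fam T lt Phi R.
Proof.
  intros Hsub Htwo. split; auto. split; [|split; [|split; [|split; [|split]]]].
  - destruct Htwo as [L1 [_ [H1 _]]]. apply (f2_Rsorted L1). auto.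
  - intros L HL. apply HF2; auto.
  - intros L L' HL HL'. rewrite (proj2 (HF2 L (Hsub L HL))), (proj2 (HF2 L' (Hsub L' HL'))). auto.
  - intros L L' HL HL' Hne x. apply Hsub in HL. apply Hsub in HL'. split.
    + intros [Hx Hx']. destruct (Hord L L' HL HL' Hne) as [A|A].
      * apply (f2_In L' x HL') in Hx'. destruct Hx' as [h|h]; auto. exfalso.
        apply (le_not_lt T lt HT _ _ (f2_tail L' x HL' h)). auto.
      * apply (f2_In L x HL) in Hx. destruct Hx as [h|h]; auto. exfalso.
        apply (le_not_lt T lt HT _ _ (f2_tail L x HL h)). auto.
    + intros h. split; [apply (f2_In L x HL) | apply (f2_In L' x HL')]; auto.
  - intros L HL x y Hx Hy Hy'. apply Hsub in HL. apply (f2_In L y HL) in Hy.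
    destruct Hy as [h|h]; [tauto|]. apply (f2_Rt L); auto.
  - intros L L' HL HL' Hne. apply Hsub in HL. apply Hsub in HL'.
    destruct (Hord L L' HL HL' Hne) as [A|A]; [left|right]; intros x y Hx _ Hy Hy'.
    + apply (f2_In L' y HL') in Hy. destruct Hy as [h|h]; [tauto|].
      apply (lt_le_trans T lt HT _ (nth a0 L' d0)); auto. apply f2_tail; auto.
    + apply (f2_In L y HL) in Hy. destruct Hy as [h|h]; [tauto|].
      apply (lt_le_trans T lt HT _ (nth a0 L d0)); auto. apply f2_tail; auto.
Qed.

End RttFam.
Fixpoint encb (l : list bool) : nat :=
  match l with [] => 0 | b :: l' => S (2 * encb l' + (if b then 1 else 0)) end.

Lemma encb_inj l l' : encb l = encb l' -> l = l'.
Proof.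
  revert l'. induction l as [|b l IH]; intros [|b' l'] E; simpl in *; try lia; auto.
  assert (b = b' /\ encb l = encb l') as [-> E2] by (destruct b, b'; split; auto; lia).
  f_equal. auto.
Qed.

Lemma rep_unique {T} lt (HT : is_omega1 T lt) L L' P : rep T lt L P -> rep T lt L' P -> L = L'.
Proof.
  intros [H1 H2] [H1' H2']. apply (SS_unique T lt HT); auto. intros x. rewrite H2, H2'. tauto.
Qed.

Theorem mainTheorem18 (T : Type) (lt : T -> T -> Prop) (HT : is_omega1 T lt)
  (C : T -> T -> Prop) (HC : clubsuit T lt C)
  (n : nat) (Hn : 1 <= n)
  (m ns rs : nat -> nat) (Htype : good_type m ns rs)
  (F : list T -> Prop) (HF : scheme T lt m ns rs F)
  (HIH : IH_rho T lt m ns rs F C n) :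
  rho_capturing T lt m ns rs F (n + 1).
Proof.
  destruct Htype as [Htype _].
  intros S HS Hunc N. change (~ cntb S) in Hunc.
  destruct (unc_nonempty S Hunc) as [s0 Hs0]. destruct (HS s0 Hs0) as [_ Hne0].
  destruct s0 as [|d0 s0']; [congruence|].
  assert (Hcof : forall s, S s -> exists k G, Fk T m F k G /\ incl s G).
  { intros s Hs. destruct HF as [HF1 [HF2 _]]. destruct (HF2 s) as [G [HG HsG]].
    destruct (HF1 G HG) as [_ [_ [k Hk]]]. exists k, G. split; [split; auto|]. intros x; auto. }
  set (kf := fun s => epsilon (inhabits 0) (fun k => exists G, Fk T m F k G /\ incl s G)).
  destruct (pigeon S kf Hunc) as [k Hk1].
  set (S1 := fun s => S s /\ kf s = k) in *.
  assert (HS1G : forall s, S1 s -> exists G, Fk T m F k G /\ incl s G).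
  { intros s [Hs Hks]. rewrite <- Hks. unfold kf.
    apply (epsilon_spec (inhabits 0) (fun k => exists G, Fk T m F k G /\ incl s G)).
    destruct (Hcof s Hs) as [k' [G HG]]. eauto. }
  set (Lk := fun xi => epsilon (inhabits nil) (fun L => rep T lt L (clos T lt m F xi k))).
  assert (Lk_spec : forall xi G, Fk T m F k G -> In xi G -> rep T lt (Lk xi) (clos T lt m F xi k)).
  { intros xi G HG Hxi. unfold Lk. apply epsilon_spec. eapply (clos_rep T lt m ns rs F HF); eauto. }
  assert (HS1last : forall s, S1 s -> In (last s d0) s).
  { intros s [Hs _]. apply last_In_. apply HS; auto. }
  assert (HS1rep : forall s, S1 s -> rep T lt (Lk (last s d0)) (clos T lt m F (last s d0) k)).
  { intros s Hs. destruct (HS1G s Hs) as [G [HG HsG]]. eapply Lk_spec; eauto. }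
  assert (HS1sub : forall s, S1 s -> forall x, In x s -> clos T lt m F (last s d0) k x).
  { intros s Hs x Hx. destruct (HS1G s Hs) as [G [HG HsG]]. split.
    - apply (SS_last T lt HT d0). apply HS, Hs. auto.
    - exists k. split; auto. exists G. split; auto. }
  assert (HS1filt : forall s, S1 s -> s = filter (fun x => inb_ x s) (Lk (last s d0))).
  { intros s Hs. destruct (HS1rep s Hs) as [Hr1 Hr2]. apply (SS_unique T lt HT).
    apply HS, Hs. apply (SS_filter T lt); auto.
    intros x. rewrite filter_In, inb_true, Hr2. split; [|tauto]. intros h. split; auto. }
  set (mask := fun s => map (fun x => inb_ x s) (Lk (last s d0))).
  destruct (pigeon S1 (fun s => encb (mask s)) Hk1) as [c Hc].
  set (S2 := fun s => S1 s /\ encb (mask s) = c) in *.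
  assert (HS2mask : forall s s', S2 s -> S2 s' -> mask s = mask s').
  { intros s s' [_ H1] [_ H2]. apply encb_inj. congruence. }
  destruct (unc_nonempty S2 Hc) as [sstar Hsstar].
  set (m0 := length (mask sstar)).
  set (Fam := fun L => exists s, S2 s /\ L = Lk (last s d0)).
  assert (HFam : forall L, Fam L -> StronglySorted lt L /\ length L = m0).
  { intros L [s [Hs ->]]. split. apply (HS1rep s (proj1 Hs)).
    unfold m0. rewrite <- (HS2mask s sstar Hs Hsstar). unfold mask. rewrite length_map. auto. }
  assert (HFamunc : ~ cntb Fam).
  { apply unc_image; auto. intros s s' Hs Hs' E.
    rewrite (HS1filt s (proj1 Hs)), (HS1filt s' (proj1 Hs')). rewrite E.
    apply filter_map_eq. pose proof (HS2mask s s' Hs Hs') as Em. unfold mask in Em.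
    rewrite E in Em. auto. }
  destruct (delta_system T lt HT d0 Fam m0 HFam HFamunc)
    as [a0 [R [Fam2 [Ha0 [HRl [HF2sub [HF2unc [HF2pre HF2ord]]]]]]]].
  assert (HF2 : forall L, Fam2 L -> StronglySorted lt L /\ length L = m0) by (intros; apply HFam, HF2sub; auto).
  set (X := fun xi => exists s, S2 s /\ last s d0 = xi /\ Fam2 (Lk xi)).
  set (selX := fun xi => epsilon (inhabits nil) (fun s => S2 s /\ last s d0 = xi /\ Fam2 (Lk xi))).
  assert (HselX : forall xi, X xi -> S2 (selX xi) /\ last (selX xi) d0 = xi /\ Fam2 (Lk xi) /\
      rep T lt (Lk xi) (clos T lt m F xi k) /\ In xi (Lk xi)).
  { intros xi Hxi. pose proof (epsilon_spec (inhabits nil) (fun s => S2 s /\ last s d0 = xi /\ Fam2 (Lk xi)) Hxi) as [A1 [A2 A3]].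
    fold (selX xi) in A1, A2. split; auto. split; auto. split; auto.
    assert (Hr := HS1rep _ (proj1 A1)). rewrite A2 in Hr. split; auto.
    apply Hr. rewrite <- A2. apply HS1sub. apply A1. apply HS1last, A1. }
  assert (HXunc : ~ cntb X).
  { intros [f Hf]. apply HF2unc.
    set (sel := fun L => epsilon (inhabits nil) (fun s => S2 s /\ L = Lk (last s d0))).
    assert (Hsel : forall L, Fam2 L -> S2 (sel L) /\ L = Lk (last (sel L) d0)).
    { intros L HL. apply (epsilon_spec (inhabits nil) (fun s => S2 s /\ L = Lk (last s d0))). apply HF2sub; auto. }
    exists (fun L => f (last (sel L) d0)). intros L L' HL HL' E.
    destruct (Hsel L HL) as [A1 A2]. destruct (Hsel L' HL') as [B1 B2].
    rewrite A2, B2. f_equal. apply Hf; auto.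
    - exists (sel L). split; auto. split; auto. rewrite <- A2. auto.
    - exists (sel L'). split; auto. split; auto. rewrite <- B2. auto. }
  destruct (unc_nonempty _ (club_iter T lt HT C HC n X HXunc)) as [delta [Hdl HdX]].
  assert (HVunc : ~ cntb (fun v => exists L, Fam2 L /\ v = nth a0 L d0)).
  { apply unc_image; auto. intros L L' HL HL' E. apply NNPP. intros Hne.
    assert (InL : In (nth a0 L d0) L) by (apply nth_In; rewrite (proj2 (HF2 L HL)); auto).
    assert (InL' : In (nth a0 L' d0) L') by (apply nth_In; rewrite (proj2 (HF2 L' HL')); auto).
    destruct (HF2ord L L' HL HL' Hne) as [h|h].
    - apply (lt_irr T lt HT (nth a0 L d0)). rewrite E at 2. auto.
    - apply (lt_irr T lt HT (nth a0 L d0)). rewrite E at 1. auto. }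
  destruct (unc_unbounded T lt HT _ HVunc delta) as [v [[Lb [HLb ->]] Hdv]].
  destruct (HF2sub Lb HLb) as [sb [Hsb HLbe]].
  set (beta := last sb d0) in *.
  set (A := skipn a0 Lb).
  assert (HAs : StronglySorted lt A).
  { destruct (HF2 Lb HLb) as [Hs _]. rewrite (f2_dec T Fam2 a0 R HF2pre Lb HLb) in Hs.
    apply (SS_app_inv T lt) in Hs. tauto. }
  assert (HAne : A <> []).
  { intros h. assert (E := length_skipn a0 Lb). fold A in E. rewrite h, (proj2 (HF2 Lb HLb)) in E. simpl in E. lia. }
  assert (HAge : forall x, In x A -> ~ lt x delta).
  { intros x Hx h. apply (lt_asym T lt HT x delta h).
    apply (lt_le_trans T lt HT _ (nth a0 Lb d0)); auto.
    apply (f2_tail T lt d0 Fam2 a0 m0 HF2 Ha0); auto. }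
  assert (HIHrep : forall xi, Cn T C n delta xi -> exists L, rep T lt L (clos T lt m F xi k)).
  { intros xi Hxi. exists (Lk xi). apply (HselX xi (HdX xi Hxi)). }
  assert (HIHrtt : rtt_fam T lt (fun L => exists xi, Cn T C n delta xi /\ rep T lt L (clos T lt m F xi k)) R).
  { apply (rtt_from_fam2 T lt HT d0 Fam2 a0 m0 R HF2 Ha0 HF2pre HF2ord).
    - intros L [xi [Hxi Hr]]. destruct (HselX xi (HdX xi Hxi)) as [_ [_ [B1 [B2 _]]]].
      rewrite (rep_unique lt HT L (Lk xi) _ Hr B2). auto.
    - destruct (Cn_two T lt C HC n delta Hdl) as [x [y [Hx [Hy Hxy]]]].
      destruct (HselX x (HdX x Hx)) as [_ [_ [_ [Bx Ix]]]].
      destruct (HselX y (HdX y Hy)) as [_ [_ [_ [By Iy]]]].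
      exists (Lk x), (Lk y). split; [eauto|]. split; [eauto|]. intros E.
      rewrite <- E in Iy. apply Bx in Iy. destruct Iy as [Iy _].
      apply (le_not_lt T lt HT y x Iy). auto. }
  destruct (HIH delta k A R Hdl HIHrep HIHrtt HAs HAne HAge N)
    as [l [HNl [Hkl [Hnl [G [RF [P [D [HG [HCn [HDs [HDl [HDC [HA HDi]]]]]]]]]]]]]].
  set (xi_ := fun i => nth i D d0).
  set (Dfun := fun i => if i <? n then selX (xi_ i) else sb).
  set (Lfun := fun i => Lk (last (Dfun i) d0)).
  set (wfun := fun i => filter (fun x => inb_ x (Dfun i)) (skipn a0 (Lfun i))).
  set (Rs := filter (fun x => inb_ x (Dfun 0)) R).
  assert (HxiC : forall i, i < n -> Cn T C n delta (xi_ i) /\ nth_error D i = Some (xi_ i)).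
  { intros i Hi. split. apply HDC. apply nth_In. lia. apply nth_error_nth'. lia. }
  assert (Hfact : forall i, i < n + 1 -> S2 (Dfun i) /\ Fam2 (Lfun i) /\
      last (Dfun i) d0 = (if i <? n then xi_ i else beta)).
  { intros i Hi. unfold Lfun, Dfun. destruct (Nat.ltb_spec i n) as [h|h].
    - destruct (HselX (xi_ i) (HdX _ (proj1 (HxiC i h)))) as [B1 [B2 [B3 _]]]. rewrite B2. auto.
    - fold beta. rewrite <- HLbe. auto. }
  assert (HDsplit : forall i, i < n + 1 -> Dfun i = Rs ++ wfun i).
  { intros i Hi. destruct (Hfact i Hi) as [H1 [H2 _]].
    destruct (Hfact 0 ltac:(lia)) as [H01 [H02 _]].
    rewrite (HS1filt _ (proj1 H1)) at 1. fold (Lfun i).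
    rewrite (f2_dec T Fam2 a0 R HF2pre _ H2) at 1. rewrite filter_app. unfold wfun. f_equal.
    unfold Rs. apply filter_map_eq.
    pose proof (HS2mask _ _ H1 H01) as Em. unfold mask in Em. fold (Lfun i) (Lfun 0) in Em.
    rewrite (f2_dec T Fam2 a0 R HF2pre _ H2), (f2_dec T Fam2 a0 R HF2pre _ H02) in Em.
    rewrite !map_app in Em. eapply app_len_inv; [|exact Em]. rewrite !length_map. auto. }
  assert (Hlen : forall i, i < n + 1 -> length (Dfun i) = length (filter (fun b => b) (mask sstar))).
  { intros i Hi. destruct (Hfact i Hi) as [H1 _]. rewrite (HS1filt _ (proj1 H1)) at 1.
    rewrite filter_length_map. rewrite <- (HS2mask _ _ H1 Hsstar). auto. }
  assert (HRRF : forall x, In x R -> In x RF).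
  { intros x Hx. destruct (HxiC 0 ltac:(lia)) as [_ E]. apply (HDi 0 (xi_ 0) ltac:(lia) E). auto. }
  exists l. split; auto. exists Dfun, Rs.
  split; [|split].
  - intros i Hi. destruct (Hfact i Hi) as [H1 _]. apply H1.
  - intros i j Hi Hj Hij E. assert (El : last (Dfun i) d0 = last (Dfun j) d0) by (rewrite E; auto).
    rewrite (proj2 (proj2 (Hfact i Hi))), (proj2 (proj2 (Hfact j Hj))) in El.
    assert (Hxd : forall i, i < n -> lt (xi_ i) beta).
    { intros i0 Hi0. apply (lt_trans T lt HT _ delta). eapply (Cn_lt T lt HT C HC n delta); eauto. apply HxiC; auto.
      apply (lt_le_trans T lt HT _ (nth a0 Lb d0)); auto.
      assert (HLr : rep T lt Lb (clos T lt m F beta k)).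
      { rewrite HLbe. apply HS1rep. apply Hsb. }
      apply HLr. apply nth_In. rewrite (proj2 (HF2 Lb HLb)). auto. }
    destruct (Nat.ltb_spec i n) as [hi|hi]; destruct (Nat.ltb_spec j n) as [hj|hj].
    + apply Hij. apply (proj1 (NoDup_nth D d0) (SS_NoDup T lt HT D HDs)); auto; lia.
    + apply (lt_irr T lt HT beta). rewrite <- El at 1. auto.
    + apply (lt_irr T lt HT beta). rewrite El at 1. auto.
    + lia.
  - apply (assemble T lt HT m ns rs F Htype HF l G RF P (n + 1) Rs Dfun wfun HG HCn); auto; try lia.
    + intros i Hi. apply HS. apply (Hfact i Hi).
    + intros i Hi. pose proof (Hlen i Hi) as L1. pose proof (Hlen 0 ltac:(lia)) as L0.
      rewrite HDsplit, length_app in L1, L0 by (auto; lia). lia.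
    + intros x Hx. apply HRRF. unfold Rs in Hx. apply filter_In in Hx. tauto.
    + intros i x Hi Hx. unfold wfun in Hx. apply filter_In in Hx. destruct Hx as [Hx _].
      destruct (Hfact i Hi) as [_ [HF2i Hl]]. unfold Lfun in Hx, HF2i.
      destruct (Nat.ltb_spec i n) as [h|h].
      * rewrite Hl in Hx, HF2i. destruct (HxiC i h) as [Hc1 Hc2].
        destruct (HDi i (xi_ i) h Hc2) as [Q1 Q2].
        destruct (HselX (xi_ i) (HdX _ Hc1)) as [_ [_ [_ [Br _]]]].
        assert (Hcl : clos T lt m F (xi_ i) k x) by (apply Br; eapply in_skipn_; eauto).
        split; auto. intros hR. apply (f2_tail_notR T lt HT Fam2 a0 m0 R HF2 HF2pre _ x HF2i Hx).
        apply Q2. auto.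
      * assert (i = n) by lia. subst i. rewrite Hl in Hx. fold beta in Hx. rewrite <- HLbe in Hx.
        apply HA. exact Hx.
Qed.
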